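(* Let $p\equiv5\pmod{12}$, $m$ odd, $\Theta\in\mathrm{Aut}(R_k)$ with order dividing $p^s$, and $\alpha=\xi^{(p-1)/4}$ with $\xi$ a generator of $\mathbb{F}_p^*$. Then $x^{6p^s}+1=(x-\alpha)^{p^s}(x+\alpha)^{p^s}(x^2+\alpha x-1)^{p^s}(x^2+\alpha^{-1}x-1)^{p^s}$, and every skew $\Theta$-negacyclic code $\mathcal C$ of length $6p^s$ over $R_k$ decomposes as $\mathcal C=\mathcal C_1\oplus\mathcal C_2\oplus\mathcal C_3\oplus\mathcal C_4$, where $\mathcal C_1,\mathcal C_2,\mathcal C_3,\mathcal C_4$ are left ideals of $R_k[x;\Theta]/\langle(x-\alpha)^{p^s}\rangle$, $R_k[x;\Theta]/\langle(x+\alpha)^{p^s}\rangle$, $R_k[x;\Theta]/\langle(x^2+\alpha x-1)^{p^s}\rangle$, $R_k[x;\Theta]/\langle(x^2+\alpha^{-1}x-1)^{p^s}\rangle$ respectively. Then $|\mathcal C|=\prod_{i=1}^4|\mathcal C_i|$, and $\mathcal C^\perp=\mathcal C_1^\perp\oplus\mathcal C_2^\perp\oplus\mathcal C_3^\perp\oplus\mathcal C_4^\perp$, where $\mathcal C_1^\perp,\mathcal C_2^\perp$ are left ideals of $R_k[x;\Theta]/\langle(x+\alpha)^{p^s}\rangle$ and $R_k[x;\Theta]/\langle(x-\alpha)^{p^s}\rangle$, and $\mathcal C_3^\perp,\mathcal C_4^\perp$ are left ideals of $R_k[x;\Theta]/\langle(x^2+\alpha^{-1}x-1)^{p^s}\rangle$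 and $R_k[x;\Theta]/\langle(x^2+\alpha x-1)^{p^s}\rangle$. Moreover $\mathcal C$ is self-dual iff $\mathcal C_1=\mathcal C_2^\perp$, $\mathcal C_2=\mathcal C_1^\perp$, $\mathcal C_3=\mathcal C_4^\perp$, $\mathcal C_4=\mathcal C_3^\perp$.
   Context: $R_k=\mathbb{F}_{p^m}[u]/\langle u^k\rangle$; $R_k[x;\Theta]$ is the skew polynomial ring with $xa=\Theta(a)x$. A skew $\Theta$-negacyclic code of length $N$ is a left ideal of $R_k[x;\Theta]/\langle x^N+1\rangle$. The decomposition is via the Chinese Remainder isomorphism for the stated factorization into pairwise coprime central factors. $\mathcal C^\perp$ is the Euclidean dual (again skew $\Theta$-negacyclic) and $\mathcal C_i^\perp$ denotes its component in the indicated factor ring. *)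

(* Defs.v *)
From HB Require Import structures.
From mathcomp Require Import all_boot all_order all_algebra.
Set Implicit Arguments. Unset Strict Implicit. Unset Printing Implicit Defensive.
Import Order.TTheory GRing.Theory.
Local Open Scope ring_scope.

Section Skew.
Variable R : finComNzRingType.

(* Multiplication in the skew polynomial ring R[x;theta] (x a = theta(a) x),
   polynomials written with left coefficients  sum_i a_i x^i :
   (a x^i)(b x^j) = a theta^i(b) x^(i+j). *)
Definition skew_mul (theta : R -> R) (f g : {poly R}) : {poly R} :=
  \sum_(i < size f) \sum_(j < size g) (f`_i * iter i theta g`_j) *: 'X^(i + j).

Definition skew_pow (theta : R -> R) (f : {poly R}) (n : nat) : {poly R} :=
  iter n (skew_mul theta f) 1.

Definition vpoly n (c : 'rV[R]_n) : {poly R} := \sum_(j < n) c 0 j *: 'X^j.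

(* c and r represent the same class modulo the ideal generated by f
   (f is central in all uses, so left and two-sided ideals coincide) *)
Definition cong (theta : R -> R) (f : {poly R}) n m (c : 'rV[R]_n) (r : 'rV[R]_m) : Prop :=
  exists q : {poly R}, vpoly c - vpoly r = skew_mul theta q f.

(* D is a left ideal of R[x;theta]/<f>, elements being represented by their
   unique reduced representatives of degree < deg f = n (f monic). *)
Definition is_lideal (theta : R -> R) (f : {poly R}) n (D : {set 'rV[R]_n}) : Prop :=
  [/\ size f = n.+1, lead_coef f = 1,
      0 \in D,
      (forall c d, c \in D -> d \in D -> c + d \in D) &
      (forall (a : {poly R}) (c r : 'rV[R]_n), c \in D ->
          (exists q, skew_mul theta a (vpoly c) - vpoly r = skew_mul theta q f) ->
          r \in D)].

Definition dual n (C : {set 'rV[R]_n}) : {set 'rV[R]_n} :=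
  [set v : 'rV[R]_n | [forall c in C, \sum_(j < n) c 0 j * v 0 j == 0]].

(* C = C1 (+) C2 (+) C3 (+) C4 via the Chinese remainder map
   g |-> (g mod f1, g mod f2, g mod f3, g mod f4): each Ci is a left ideal of
   R[x;theta]/<fi> and the CRT image of C is exactly C1 x C2 x C3 x C4. *)
Definition decomp4 (theta : R -> R) (f1 f2 f3 f4 : {poly R}) n n1 n2 n3 n4
    (C : {set 'rV[R]_n}) (C1 : {set 'rV[R]_n1}) (C2 : {set 'rV[R]_n2})
    (C3 : {set 'rV[R]_n3}) (C4 : {set 'rV[R]_n4}) : Prop :=
  [/\ is_lideal theta f1 C1, is_lideal theta f2 C2,
      is_lideal theta f3 C3, is_lideal theta f4 C4 &
      ((forall c, c \in C ->
         (forall r, cong theta f1 c r -> r \in C1) /\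
         (forall r, cong theta f2 c r -> r \in C2) /\
         (forall r, cong theta f3 c r -> r \in C3) /\
         (forall r, cong theta f4 c r -> r \in C4)) /\
      (forall r1 r2 r3 r4, r1 \in C1 -> r2 \in C2 -> r3 \in C3 -> r4 \in C4 ->
         exists2 c, c \in C &
           [/\ cong theta f1 c r1, cong theta f2 c r2,
               cong theta f3 c r3 & cong theta f4 c r4]))].

End Skew.

Definition Fp_emb (p : nat) (R : nzRingType) (z : 'F_p) : R := (nat_of_ord z)%:R.

(* Main.v *)
Require Import Defs.
From HB Require Import structures.
From mathcomp Require Import all_boot all_order all_algebra all_field zify ring.
Set Implicit Arguments. Unset Strict Implicit. Unset Printing Implicit Defensive.
Import GRing.Theory.
Local Open Scope ring_scope.

Section Gen.
Variable R : finComNzRingType.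
Variable T : {rmorphism R -> R}.
Local Notation sm := (skew_mul T).
Local Notation mT := (map_poly T).

Lemma sm_expand a g :
  sm a g = \sum_(i < size a) a`_i *: ('X^i * map_poly (iter i T) g).
Proof.
rewrite /skew_mul; apply: eq_bigr => i _.
rewrite /map_poly poly_def mulr_sumr scaler_sumr; apply: eq_bigr => j _.
by rewrite -scalerAr -exprD scalerA.
Qed.

Lemma map_poly_iterE i g : map_poly (iter i T) g = iter i mT g.
Proof.
elim: i => [|i IH] /=.
  by rewrite (@eq_map_poly _ _ _ id) ?map_poly_id.
rewrite -IH -map_poly_comp; apply: eq_map_poly => x /=; done.
Qed.

Lemma iterMp i f g : iter i mT (f * g) = iter i mT f * iter i mT g.
Proof. by elim: i => [|i IH] //=; rewrite IH rmorphM. Qed.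
Lemma iterDp i f g : iter i mT (f + g) = iter i mT f + iter i mT g.
Proof. by elim: i => [|i IH] //=; rewrite IH rmorphD. Qed.
Lemma iterNp i f : iter i mT (- f) = - iter i mT f.
Proof. by elim: i => [|i IH] //=; rewrite IH rmorphN. Qed.
Lemma iterXp i : iter i mT 'X = 'X.
Proof. by elim: i => [|i IH] //=; rewrite IH map_polyX. Qed.
Lemma iterZp i c f : iter i mT (c *: f) = (iter i T c) *: iter i mT f.
Proof. by elim: i => [|i IH] //=; rewrite IH map_polyZ. Qed.

Definition fixedp (f : {poly R}) := mT f = f.

Lemma fixed_iter i f : fixedp f -> iter i mT f = f.
Proof. by move=> hf; elim: i => [|i IH] //=; rewrite IH. Qed.

Lemma sm_fixed a g : fixedp g -> sm a g = a * g.
Proof.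
move=> hg; rewrite sm_expand.
under eq_bigr do rewrite map_poly_iterE fixed_iter //.
rewrite -[in RHS](coefK a) poly_def mulr_suml; apply: eq_bigr => i _.
by rewrite scalerAl.
Qed.

Lemma sm_mulfixed a q f : fixedp f -> sm a (q * f) = sm a q * f.
Proof.
move=> hf; rewrite !sm_expand mulr_suml; apply: eq_bigr => i _.
by rewrite !map_poly_iterE iterMp (fixed_iter _ hf) mulrA scalerAl.
Qed.

Lemma sm_addr a g h : sm a (g + h) = sm a g + sm a h.
Proof.
rewrite !sm_expand -big_split; apply: eq_bigr => i _ /=.
by rewrite !map_poly_iterE iterDp mulrDr scalerDr.
Qed.

Lemma sm_oppr a g : sm a (- g) = - sm a g.
Proof.
rewrite !sm_expand -sumrN; apply: eq_bigr => i _ /=.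
by rewrite !map_poly_iterE iterNp mulrN scalerN.
Qed.

Lemma sm_subr a g h : sm a (g - h) = sm a g - sm a h.
Proof. by rewrite sm_addr sm_oppr. Qed.

Definition goodp (q : nat) (e : {poly R}) := forall i, e`_i != 0 -> (q %| i)%N.

Lemma iter_mulq q k x : (forall r, iter q T r = r) -> iter (q * k) T x = x.
Proof.
move=> hq; elim: k => [|k IH]; first by rewrite muln0.
by rewrite mulnS iterD IH hq.
Qed.

Lemma sm_good q e g : (forall r, iter q T r = r) -> goodp q e -> sm e g = e * g.
Proof.
move=> hq he; rewrite sm_expand.
rewrite -[in RHS](coefK e) poly_def mulr_suml; apply: eq_bigr => i _.
have [z|nz] := eqVneq e`_i 0.
  by rewrite z !scale0r mul0r.
have /dvdnP [k hk] := he _ nz.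
have -> : map_poly (iter i T) g = g.
  by apply/polyP => j; rewrite coef_map_id0 hk mulnC iter_mulq.
by rewrite scalerAl.
Qed.

Lemma good0 q : goodp q 0.
Proof. by move=> i; rewrite coef0 eqxx. Qed.
Lemma goodC q c : goodp q c%:P.
Proof. by move=> i; rewrite coefC; case: i => // i; rewrite eqxx. Qed.
Lemma goodXq q : goodp q 'X^q.
Proof. by move=> i; rewrite coefXn; case: (eqVneq i q) => [->|_]; rewrite ?dvdnn ?eqxx. Qed.
Lemma goodD q e f : goodp q e -> goodp q f -> goodp q (e + f).
Proof.
move=> he hf i; rewrite coefD => nz.
have [z|] := eqVneq e`_i 0; last exact: he.
by apply: hf; move: nz; rewrite z add0r.
Qed.
Lemma goodN q e : goodp q e -> goodp q (- e).
Proof. by move=> he i; rewrite coefN oppr_eq0; apply: he. Qed.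
Lemma goodM q e f : goodp q e -> goodp q f -> goodp q (e * f).
Proof.
move=> he hf i; rewrite coefM => nz.
have [j /andP [_ nzj]] : exists j : 'I_i.+1, true && (e`_j * f`_(i - j) != 0).
  apply/existsP; apply: contraR nz => /existsPn H.
  by rewrite big1 // => j _; move: (H j) => /negbNE /eqP.
have nzj1 : e`_j != 0 by apply: contraNneq nzj => ->; rewrite mul0r.
have nzj2 : f`_(i - j) != 0 by apply: contraNneq nzj => ->; rewrite mulr0.
have := he _ nzj1; have := hf _ nzj2 => d2 d1.
have lji : (j <= i)%N by rewrite -ltnS ltn_ord.
by rewrite -(subnK lji) dvdn_add.
Qed.

End Gen.

Section Rows.
Variable R : finComNzRingType.

Definition vrow n (g : {poly R}) : 'rV[R]_n := \row_(j < n) g`_j.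

Lemma coef_vpoly n (c : 'rV[R]_n) (j : 'I_n) : (vpoly c)`_j = c 0 j.
Proof.
rewrite /vpoly coef_sum (bigD1 j) //= coefZ coefXn eqxx mulr1 big1 ?addr0 // => i ij.
rewrite coefZ coefXn.
have -> : (nat_of_ord j == nat_of_ord i) = false by apply/negbTE; rewrite eq_sym.
by rewrite mulr0.
Qed.

Lemma coef_vpoly_ge n (c : 'rV[R]_n) i : (n <= i)%N -> (vpoly c)`_i = 0.
Proof.
move=> hi; rewrite /vpoly coef_sum big1 // => j _; rewrite coefZ coefXn.
have -> : (i == j) = false by apply/negbTE; rewrite gtn_eqF // (leq_trans (ltn_ord j)).
by rewrite mulr0.
Qed.

Lemma size_vpoly n (c : 'rV[R]_n) : (size (vpoly c) <= n)%N.
Proof. by apply/leq_sizeP => i; apply: coef_vpoly_ge. Qed.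

Lemma vrowK n (c : 'rV[R]_n) : vrow n (vpoly c) = c.
Proof. by apply/rowP => j; rewrite mxE coef_vpoly. Qed.

Lemma vpolyK n (g : {poly R}) : (size g <= n)%N -> vpoly (vrow n g) = g.
Proof.
move=> hs; apply/polyP => i; case: (ltnP i n) => hi.
  by have := coef_vpoly (vrow n g) (Ordinal hi); rewrite mxE /= => ->.
by rewrite coef_vpoly_ge //; move/leq_sizeP: hs => /(_ i hi) ->.
Qed.

Lemma vpolyD n (c d : 'rV[R]_n) : vpoly (c + d) = vpoly c + vpoly d.
Proof. by rewrite /vpoly -big_split; apply: eq_bigr => j _; rewrite mxE scalerDl. Qed.
Lemma vpolyN n (c : 'rV[R]_n) : vpoly (- c) = - vpoly c.
Proof. by rewrite /vpoly -sumrN; apply: eq_bigr => j _; rewrite mxE scaleNr. Qed.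
Lemma vpolyZ n b (c : 'rV[R]_n) : vpoly (b *: c) = b *: vpoly c.
Proof. by rewrite /vpoly scaler_sumr; apply: eq_bigr => j _; rewrite mxE scalerA. Qed.
Lemma vpoly0 n : vpoly (0 : 'rV[R]_n) = 0.
Proof. by rewrite /vpoly big1 // => j _; rewrite mxE scale0r. Qed.
Lemma vpoly_inj n (c d : 'rV[R]_n) : vpoly c = vpoly d -> c = d.
Proof. by move=> h; rewrite -(vrowK c) h vrowK. Qed.

Definition pdvd (f g : {poly R}) := exists q, g = q * f.
Lemma pdvd0 f : pdvd f 0. Proof. by exists 0; rewrite mul0r. Qed.
Lemma pdvdD f g h : pdvd f g -> pdvd f h -> pdvd f (g + h).
Proof. by move=> [a ->] [b ->]; exists (a + b); rewrite mulrDl. Qed.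
Lemma pdvdN f g : pdvd f g -> pdvd f (- g).
Proof. by move=> [a ->]; exists (- a); rewrite mulNr. Qed.
Lemma pdvdB f g h : pdvd f g -> pdvd f h -> pdvd f (g - h).
Proof. by move=> ? ?; apply: pdvdD => //; apply: pdvdN. Qed.
Lemma pdvdMl f k g : pdvd f g -> pdvd f (k * g).
Proof. by move=> [a ->]; exists (k * a); rewrite mulrA. Qed.
Lemma pdvd_mull f k : pdvd f (k * f).
Proof. by exists k. Qed.
Lemma pdvd_trans f g h : pdvd f g -> pdvd g h -> pdvd f h.
Proof. by move=> [a ->] [b ->]; exists (b * a); rewrite mulrA. Qed.

Lemma pdvd_uniq n f (c d : 'rV[R]_n) : f \is monic -> size f = n.+1 ->
  pdvd f (vpoly c - vpoly d) -> c = d.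
Proof.
move=> mon hs [q hq]; case: (eqVneq q 0) => [q0|nz].
  by apply: vpoly_inj; apply/eqP; rewrite -subr_eq0 hq q0 mul0r.
have : (size (vpoly c - vpoly d)%R <= n)%N.
  by apply/leq_sizeP => i hi; rewrite coefB !coef_vpoly_ge // subrr.
rewrite hq size_Mmonic // hs => h; exfalso.
have := size_poly_gt0 q; rewrite nz => h2; lia.
Qed.

Lemma reduce n f g : f \is monic -> size f = n.+1 ->
  exists r : 'rV[R]_n, pdvd f (g - vpoly r).
Proof.
move=> mon hs; exists (vrow n (Pdiv.Ring.rmodp g f)).
rewrite vpolyK.
  by exists (Pdiv.Ring.rdivp g f); rewrite {1}(Pdiv.RingMonic.rdivp_eq mon g) addrK.
have := Pdiv.Ring.ltn_rmodp g f; rewrite monic_neq0 // hs ltnS; by apply.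
Qed.

Variable T : {rmorphism R -> R}.
Local Notation sm := (skew_mul T).

Lemma cong_pdvd f n m (c : 'rV[R]_n) (r : 'rV[R]_m) :
  fixedp T f -> cong T f c r <-> pdvd f (vpoly c - vpoly r).
Proof. by move=> hf; split=> -[q h]; exists q; rewrite h ?sm_fixed. Qed.

Definition inP n (fN : {poly R}) (D : {set 'rV[R]_n}) g :=
  exists2 c, c \in D & pdvd fN (g - vpoly c).

Section Ideal.
Variables (n : nat) (fN : {poly R}) (D : {set 'rV[R]_n}).
Hypothesis hD : is_lideal T fN D.
Hypothesis hfN : fixedp T fN.

Lemma lid_mon : fN \is monic.
Proof. by case: hD => _ hl _ _ _; rewrite monicE hl. Qed.
Lemma lid_size : size fN = n.+1.
Proof. by case: hD. Qed.

Lemma lideal_sm a c : c \in D -> inP fN D (sm a (vpoly c)).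
Proof.
case: hD => hs hl h0 hadd hcl hc.
have [r hr] := reduce (sm a (vpoly c)) lid_mon hs.
exists r => //; apply: (hcl a c r hc).
by case: hr => q hq; exists q; rewrite hq sm_fixed.
Qed.

Lemma inP_vpoly c : c \in D -> inP fN D (vpoly c).
Proof. by move=> hc; exists c => //; rewrite subrr; apply: pdvd0. Qed.

Lemma inP_add g h : inP fN D g -> inP fN D h -> inP fN D (g + h).
Proof.
case: hD => _ _ _ hadd _ [c hc hg] [d hd hh]; exists (c + d); first exact: hadd.
have -> : g + h - vpoly (c + d) = (g - vpoly c) + (h - vpoly d).
  by rewrite vpolyD; ring.
exact: pdvdD.
Qed.

Lemma inP_cong g h : inP fN D g -> pdvd fN (h - g) -> inP fN D h.
Proof.
move=> [c hc hg] hd; exists c => //.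
have -> : h - vpoly c = (h - g) + (g - vpoly c) by ring.
exact: pdvdD.
Qed.

Lemma inP_sm a g : inP fN D g -> inP fN D (sm a g).
Proof.
move=> [c hc [q hq]]; apply: (inP_cong (lideal_sm a hc)).
by rewrite -sm_subr hq sm_mulfixed //; apply: pdvd_mull.
Qed.

Lemma inP_row r : inP fN D (vpoly r) -> r \in D.
Proof.
move=> [c hc hd]; suff -> : r = c by [].
exact: (pdvd_uniq lid_mon lid_size hd).
Qed.

End Ideal.

Definition img n m (f : {poly R}) (D : {set 'rV[R]_n}) : {set 'rV[R]_m} :=
  [set r | [exists c in D, Pdiv.Ring.rdvdp f (vpoly c - vpoly r)]].

Lemma imgP n m f (D : {set 'rV[R]_n}) (r : 'rV[R]_m) : f \is monic ->
  reflect (exists2 c, c \in D & pdvd f (vpoly c - vpoly r)) (r \in img m f D).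
Proof.
move=> mon; rewrite inE; apply: (iffP existsP).
  by move=> [c /andP [hc /(Pdiv.RingMonic.rdvdpP mon) [q hq]]]; exists c => //; exists q.
by move=> [c hc [q hq]]; exists c; rewrite hc /=; apply/(Pdiv.RingMonic.rdvdpP mon); exists q.
Qed.

Lemma img_lideal n m fN f (D : {set 'rV[R]_n}) :
  is_lideal T fN D -> fixedp T fN -> fixedp T f -> f \is monic -> size f = m.+1 ->
  pdvd f fN -> is_lideal T f (img m f D).
Proof.
move=> hD hfN hf mon hs hdiv.
have hD' := hD; case: hD' => _ _ h0 hadd _.
split => //; first exact/monicP.
- by apply/imgP => //; exists 0 => //; rewrite !vpoly0 subrr; apply: pdvd0.
- move=> c d /imgP -/(_ mon) [c0 hc0 h1] /imgP -/(_ mon) [d0 hd0 h2].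
  apply/imgP => //; exists (c0 + d0); first exact: hadd.
  have -> : vpoly (c0 + d0) - vpoly (c + d) = (vpoly c0 - vpoly c) + (vpoly d0 - vpoly d).
    by rewrite !vpolyD; ring.
  exact: pdvdD.
- move=> a c r /imgP -/(_ mon) [c0 hc0 [k hk]] [q hq].
  have [d hd hdd] := lideal_sm hD hfN a hc0.
  apply/imgP => //; exists d => //.
  have -> : vpoly d - vpoly r = - (sm a (vpoly c0) - vpoly d) + sm a (vpoly c0 - vpoly c)
              + (sm a (vpoly c) - vpoly r) by rewrite sm_subr; ring.
  apply: pdvdD; first apply: pdvdD.
  + by apply: pdvdN; apply: pdvd_trans hdiv hdd.
  + by rewrite hk sm_mulfixed //; apply: pdvd_mull.
  + by rewrite hq sm_fixed //; apply: pdvd_mull.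
Qed.

End Rows.

Section Dual.
Variable R : finComNzRingType.
Variable T : {rmorphism R -> R}.
Hypothesis Tinj : injective T.
Local Notation sm := (skew_mul T).
Local Notation mT := (map_poly T).

Definition shq n (A : {poly R}) : {poly R} :=
  'X * mT A - (T A`_n.-1)%:P * ('X^n + 1).

Lemma coef_shq n A i : (shq n A)`_i =
  (if i == 0%N then 0 else T A`_i.-1) - T A`_n.-1 * ((i == n)%:R + (i == 0%N)%:R).
Proof. by rewrite /shq coefB coefXM coefCM coefD coefXn coef1 coef_map. Qed.

Lemma form_aux n (A B : {poly R}) : (0 < n)%N ->
  \sum_(0 <= j < n) (shq n A)`_j * (shq n B)`_j = T (\sum_(0 <= j < n) A`_j * B`_j).
Proof.
case: n => // n _.
rewrite big_nat_recl // [in RHS]big_nat_recr //= rmorphD rmorph_sum addrC.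
rewrite !coef_shq /= !add0r !mulr1 mulrNN -rmorphM; congr (_ + _).
apply: eq_big_nat => i /andP [_ lt]; rewrite !coef_shq /= eqSS.
by rewrite ltn_eqF // !addr0 !mulr0 !subr0 rmorphM.
Qed.

Lemma fixedXn1 n : fixedp T ('X^n + 1).
Proof. by apply/polyP => i; rewrite coef_map /= coefD coefXn coef1 rmorphD !rmorph_nat. Qed.

Lemma sm_X g : sm 'X g = 'X * mT g.
Proof.
rewrite sm_expand size_polyX big_ord_recr big_ord1 /= coefX /= scale0r add0r coefX /= scale1r expr1.
by congr (_ * _); apply: eq_map_poly.
Qed.

Lemma fixedM a b : fixedp T a -> fixedp T b -> fixedp T (a * b).
Proof. by rewrite /fixedp => ha hb; rewrite -{2}ha -{2}hb; apply: rmorphM. Qed.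
Lemma fixedD a b : fixedp T a -> fixedp T b -> fixedp T (a + b).
Proof. by rewrite /fixedp => ha hb; rewrite -{2}ha -{2}hb; apply: rmorphD. Qed.
Lemma fixedN a : fixedp T a -> fixedp T (- a).
Proof. by rewrite /fixedp => ha; rewrite -{2}ha; apply: rmorphN. Qed.
Lemma fixedC c : T c = c -> fixedp T c%:P.
Proof. by move=> h; rewrite /fixedp map_polyC /= h. Qed.
Lemma fixedX : fixedp T 'X.
Proof. by rewrite /fixedp map_polyX. Qed.
Lemma fixed1 : fixedp T 1.
Proof. by rewrite /fixedp rmorph1. Qed.
Lemma fixedXn k : fixedp T ('X^k).
Proof. by rewrite /fixedp map_polyXn. Qed.

Lemma sm_pow_fixed (h : {poly R}) k : fixedp T h -> fixedp T (h ^+ k) /\ skew_pow T h k = h ^+ k.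
Proof.
move=> hh; elim: k => [|k [IH1 IH2]].
  by split; rewrite ?expr0 //; apply: fixed1.
split; first by rewrite exprS; apply: fixedM.
by rewrite /skew_pow /= -/(skew_pow T h k) IH2 sm_fixed // exprS.
Qed.

Variables (n : nat) (C : {set 'rV[R]_n}).
Hypothesis n0 : (0 < n)%N.
Let fN : {poly R} := 'X^n + 1.
Hypothesis hC : is_lideal T fN C.

Definition sh (v : 'rV[R]_n) : 'rV[R]_n := vrow n (shq n (vpoly v)).

Lemma size_shq (v : 'rV[R]_n) : (size (shq n (vpoly v)) <= n)%N.
Proof.
apply/leq_sizeP => i hi; rewrite coef_shq.
have -> : (i == 0%N) = false by apply/negbTE; rewrite -lt0n (leq_trans n0).
have [->|ne] := eqVneq i n.
  by rewrite /= ?mulr1n ?mulr0n ?addr0 mulr1 subrr.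
rewrite coef_vpoly_ge ?rmorph0; last by lia.
by rewrite /= ?mulr0n ?addr0 ?mulr0 ?subr0.
Qed.

Lemma vpoly_sh (v : 'rV[R]_n) : vpoly (sh v) = shq n (vpoly v).
Proof. by rewrite vpolyK // size_shq. Qed.

Lemma sh_inj : injective sh.
Proof.
move=> v w h; have := congr1 (@vpoly R n) h; rewrite !vpoly_sh => e.
have e0 := congr1 (fun p : {poly R} => p`_0) e; rewrite /= !coef_shq /= in e0.
have n0' : (0%N == n) = false by lia.
move: e0; rewrite n0' /= mulr0n !add0r !mulr1 => /oppr_inj e0.
have e2 := congr1 (fun p : {poly R} => p + (T (vpoly w)`_n.-1)%:P * ('X^n + 1)) e.
rewrite /= /shq e0 !subrK in e2.
have : mT (vpoly v) = mT (vpoly w).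
  apply/polyP => i; have := congr1 (fun p : {poly R} => p`_i.+1) e2; by rewrite /= !coefXM.
by move/(map_inj_poly Tinj (rmorph0 T)); apply: vpoly_inj.
Qed.

Lemma sh_form (c v : 'rV[R]_n) : \sum_(j < n) sh c 0 j * sh v 0 j = T (\sum_(j < n) c 0 j * v 0 j).
Proof.
have -> : \sum_(j < n) sh c 0 j * sh v 0 j =
   \sum_(0 <= j < n) (shq n (vpoly c))`_j * (shq n (vpoly v))`_j.
  by rewrite big_mkord; apply: eq_bigr => j _; rewrite !mxE.
have -> : \sum_(j < n) c 0 j * v 0 j = \sum_(0 <= j < n) (vpoly c)`_j * (vpoly v)`_j.
  by rewrite big_mkord; apply: eq_bigr => j _; rewrite !coef_vpoly.
exact: form_aux.
Qed.

Lemma sh_in c : c \in C -> sh c \in C.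
Proof.
case: hC => _ _ _ _ hcl hc; apply: (hcl 'X c) => //.
exists ((T (vpoly c)`_n.-1)%:P).
rewrite sm_X vpoly_sh sm_fixed; last exact: fixedXn1.
by rewrite /shq /fN; ring.
Qed.

Lemma shC : sh @: C = C.
Proof.
apply/eqP; rewrite eqEcard; apply/andP; split.
  by apply/subsetP => x /imsetP [y hy ->]; apply: sh_in.
by rewrite card_in_imset //; move=> x y _ _; apply: sh_inj.
Qed.

Lemma dual_sh v : v \in dual C -> sh v \in dual C.
Proof.
rewrite !inE => /forallP hv; apply/forallP => c; apply/implyP => hc.
have : c \in sh @: C by rewrite shC.
case/imsetP => c' hc' ->; rewrite sh_form.
by have := hv c'; rewrite hc' /= => /eqP ->; rewrite rmorph0.
Qed.

Lemma dual0 : 0 \in dual C.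
Proof.
by rewrite inE; apply/forallP => c; apply/implyP => _; rewrite big1 // => j _; rewrite mxE mulr0.
Qed.

Lemma dualD v w : v \in dual C -> w \in dual C -> v + w \in dual C.
Proof.
rewrite !inE => /forallP hv /forallP hw; apply/forallP => c; apply/implyP => hc.
have := hv c; have := hw c; rewrite hc /= => /eqP h1 /eqP h2.
rewrite (eq_bigr (fun j => c 0 j * v 0 j + c 0 j * w 0 j)); last by move=> j _; rewrite mxE mulrDr.
by rewrite big_split /= h1 h2 addr0.
Qed.

Lemma dualZ b v : v \in dual C -> b *: v \in dual C.
Proof.
rewrite !inE => /forallP hv; apply/forallP => c; apply/implyP => hc.
have := hv c; rewrite hc /= => /eqP h1.
rewrite (eq_bigr (fun j => b * (c 0 j * v 0 j))); last by move=> j _; rewrite mxE mulrCA.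
by rewrite -mulr_sumr h1 mulr0.
Qed.

Local Notation D := (dual C).

Lemma dinP_add g h : inP fN D g -> inP fN D h -> inP fN D (g + h).
Proof.
move=> [c hc hg] [d hd hh]; exists (c + d); first exact: dualD.
have -> : g + h - vpoly (c + d) = (g - vpoly c) + (h - vpoly d) by rewrite vpolyD; ring.
exact: pdvdD.
Qed.

Lemma dinP_scale b g : inP fN D g -> inP fN D (b *: g).
Proof.
move=> [c hc [k hk]]; exists (b *: c); first exact: dualZ.
exists (b%:P * k); by rewrite vpolyZ -scalerBr hk -mulrA mul_polyC.
Qed.

Lemma dinP_S g : inP fN D g -> inP fN D ('X * mT g).
Proof.
move=> [c hc [k hk]]; exists (sh c); first exact: dual_sh.
exists ('X * mT k + (T (vpoly c)`_n.-1)%:P).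
have -> : 'X * mT g = 'X * mT (g - vpoly c) + 'X * mT (vpoly c) by rewrite rmorphB; ring.
have hm : map_poly T (k * fN) = map_poly T k * fN.
  by rewrite /fN -{2}(fixedXn1 n); apply: rmorphM.
by rewrite hk hm vpoly_sh /shq /fN; ring.
Qed.

Lemma iterS i g : iter i (fun h => 'X * mT h) g = 'X^i * map_poly (iter i T) g.
Proof.
elim: i => [|i IH].
  by rewrite /= expr0 mul1r (@eq_map_poly _ _ _ id) ?map_poly_id.
have hm : forall h, mT ('X^i * h) = 'X^i * mT h.
  by move=> h; rewrite -{2}(fixedXn i); apply: rmorphM.
by rewrite /= IH hm !map_poly_iterE /= exprS mulrA.
Qed.

Lemma dual_lideal : is_lideal T fN D.
Proof.
have hC' := hC; case: hC' => hs hl _ _ _.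
split => //; [exact: dual0 | exact: dualD |].
move=> a v r hv [q hq].
have Pv : inP fN D (sm a (vpoly v)).
  rewrite sm_expand; apply: (big_ind (inP fN D)).
  - by exists 0; rewrite ?dual0 // vpoly0 subrr; apply: pdvd0.
  - exact: dinP_add.
  move=> i _; apply: dinP_scale; rewrite -iterS.
  elim: (nat_of_ord i) => [|j IH] /=; first by exists v => //; rewrite subrr; apply: pdvd0.
  exact: dinP_S.
have mon : fN \is monic by rewrite monicE hl.
case: Pv => d hd hdd; suff -> : r = d by [].
apply: (pdvd_uniq mon hs).
have -> : vpoly r - vpoly d = (sm a (vpoly v) - vpoly d) - (sm a (vpoly v) - vpoly r) by ring.
by apply: pdvdB => //; rewrite hq sm_fixed; [apply: pdvd_mull | exact: fixedXn1].
Qed.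

End Dual.

Section CRT.
Variable R : finComNzRingType.
Variable T : {rmorphism R -> R}.
Local Notation sm := (skew_mul T).
Variable q : nat.
Hypothesis hq : forall r, iter q T r = r.
Variables (n n1 n2 n3 n4 : nat) (fN f1 f2 f3 f4 e1 e2 e3 e4 h1 h2 h3 h4 : {poly R}).
Hypotheses (mon1 : f1 \is monic) (mon2 : f2 \is monic) (mon3 : f3 \is monic) (mon4 : f4 \is monic).
Hypotheses (fx1 : fixedp T f1) (fx2 : fixedp T f2) (fx3 : fixedp T f3) (fx4 : fixedp T f4)
  (fxN : fixedp T fN).
Hypotheses (sz1 : size f1 = n1.+1) (sz2 : size f2 = n2.+1) (sz3 : size f3 = n3.+1)
  (sz4 : size f4 = n4.+1).
Hypothesis HN : fN = f1 * f2 * f3 * f4.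
Hypothesis He : e1 + e2 + e3 + e4 = 1.
Hypotheses (He1 : e1 = h1 * (f2 * f3 * f4)) (He2 : e2 = h2 * (f1 * f3 * f4))
  (He3 : e3 = h3 * (f1 * f2 * f4)) (He4 : e4 = h4 * (f1 * f2 * f3)).
Hypotheses (g1 : goodp q e1) (g2 : goodp q e2) (g3 : goodp q e3) (g4 : goodp q e4).

Lemma pdvdMr (f g k : {poly R}) : pdvd f g -> pdvd f (g * k).
Proof. by move=> h; rewrite mulrC; apply: pdvdMl. Qed.

Lemma crt_inj g : pdvd f1 g -> pdvd f2 g -> pdvd f3 g -> pdvd f4 g -> pdvd fN g.
Proof.
move=> [k1 hk1] [k2 hk2] [k3 hk3] [k4 hk4].
have t1 : e1 * g = h1 * k1 * fN by rewrite He1 HN hk1; ring.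
have t2 : e2 * g = h2 * k2 * fN by rewrite He2 HN hk2; ring.
have t3 : e3 * g = h3 * k3 * fN by rewrite He3 HN hk3; ring.
have t4 : e4 * g = h4 * k4 * fN by rewrite He4 HN hk4; ring.
exists (h1 * k1 + h2 * k2 + h3 * k3 + h4 * k4).
have -> : g = (e1 + e2 + e3 + e4) * g by rewrite He mul1r.
by rewrite !mulrDl t1 t2 t3 t4.
Qed.

Lemma comp_gen f ea eb ec ed va vb vc vd vr c :
  pdvd f fN -> pdvd f (ea - 1) -> pdvd f eb -> pdvd f ec -> pdvd f ed ->
  pdvd f (va - vr) -> pdvd fN (ea * va + eb * vb + ec * vc + ed * vd - c) ->
  pdvd f (c - vr).
Proof.
move=> hN ha hb hc hd hv hg.
have -> : c - vr = - (ea * va + eb * vb + ec * vc + ed * vd - c) + (ea - 1) * va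
   + eb * vb + ec * vc + ed * vd + (va - vr) by ring.
apply: pdvdD => //; apply: pdvdD; last exact: pdvdMr.
apply: pdvdD; last exact: pdvdMr.
apply: pdvdD; last exact: pdvdMr.
apply: pdvdD; last exact: pdvdMr.
by apply: pdvdN; apply: pdvd_trans hN hg.
Qed.

Lemma dN1 : pdvd f1 fN. Proof. by exists (f2 * f3 * f4); rewrite HN; ring. Qed.
Lemma dN2 : pdvd f2 fN. Proof. by exists (f1 * f3 * f4); rewrite HN; ring. Qed.
Lemma dN3 : pdvd f3 fN. Proof. by exists (f1 * f2 * f4); rewrite HN; ring. Qed.
Lemma dN4 : pdvd f4 fN. Proof. by exists (f1 * f2 * f3); rewrite HN; ring. Qed.

Lemma d12 : pdvd f1 e2. Proof. by exists (h2 * f3 * f4); rewrite He2; ring. Qed.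
Lemma d13 : pdvd f1 e3. Proof. by exists (h3 * f2 * f4); rewrite He3; ring. Qed.
Lemma d14 : pdvd f1 e4. Proof. by exists (h4 * f2 * f3); rewrite He4; ring. Qed.
Lemma d21 : pdvd f2 e1. Proof. by exists (h1 * f3 * f4); rewrite He1; ring. Qed.
Lemma d23 : pdvd f2 e3. Proof. by exists (h3 * f1 * f4); rewrite He3; ring. Qed.
Lemma d24 : pdvd f2 e4. Proof. by exists (h4 * f1 * f3); rewrite He4; ring. Qed.
Lemma d31 : pdvd f3 e1. Proof. by exists (h1 * f2 * f4); rewrite He1; ring. Qed.
Lemma d32 : pdvd f3 e2. Proof. by exists (h2 * f1 * f4); rewrite He2; ring. Qed.
Lemma d34 : pdvd f3 e4. Proof. by exists (h4 * f1 * f2); rewrite He4; ring. Qed.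
Lemma d41 : pdvd f4 e1. Proof. by exists (h1 * f2 * f3); rewrite He1; ring. Qed.
Lemma d42 : pdvd f4 e2. Proof. by exists (h2 * f1 * f3); rewrite He2; ring. Qed.
Lemma d43 : pdvd f4 e3. Proof. by exists (h3 * f1 * f2); rewrite He3; ring. Qed.

Lemma e1m : e1 - 1 = - (e2 + e3 + e4). Proof. by rewrite -He; ring. Qed.
Lemma e2m : e2 - 1 = - (e1 + e3 + e4). Proof. by rewrite -He; ring. Qed.
Lemma e3m : e3 - 1 = - (e1 + e2 + e4). Proof. by rewrite -He; ring. Qed.
Lemma e4m : e4 - 1 = - (e1 + e2 + e3). Proof. by rewrite -He; ring. Qed.

Lemma d11 : pdvd f1 (e1 - 1).
Proof. by rewrite e1m; apply/pdvdN/pdvdD; [apply/pdvdD|]; rewrite ?[_ e2]d12 /=; [exact: d12|exact: d13|exact: d14]. Qed.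
Lemma d22 : pdvd f2 (e2 - 1).
Proof. by rewrite e2m; apply/pdvdN/pdvdD; [apply/pdvdD|]; [exact: d21|exact: d23|exact: d24]. Qed.
Lemma d33 : pdvd f3 (e3 - 1).
Proof. by rewrite e3m; apply/pdvdN/pdvdD; [apply/pdvdD|]; [exact: d31|exact: d32|exact: d34]. Qed.
Lemma d44 : pdvd f4 (e4 - 1).
Proof. by rewrite e4m; apply/pdvdN/pdvdD; [apply/pdvdD|]; [exact: d41|exact: d42|exact: d43]. Qed.

Lemma crt_surj (D : {set 'rV[R]_n}) c1 c2 c3 c4 (r1 : 'rV[R]_n1) (r2 : 'rV[R]_n2)
    (r3 : 'rV[R]_n3) (r4 : 'rV[R]_n4) :
  is_lideal T fN D -> c1 \in D -> c2 \in D -> c3 \in D -> c4 \in D ->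
  pdvd f1 (vpoly c1 - vpoly r1) -> pdvd f2 (vpoly c2 - vpoly r2) ->
  pdvd f3 (vpoly c3 - vpoly r3) -> pdvd f4 (vpoly c4 - vpoly r4) ->
  exists2 c, c \in D & [/\ pdvd f1 (vpoly c - vpoly r1), pdvd f2 (vpoly c - vpoly r2),
                          pdvd f3 (vpoly c - vpoly r3) & pdvd f4 (vpoly c - vpoly r4)].
Proof.
move=> hD hc1 hc2 hc3 hc4 p1 p2 p3 p4.
set g := e1 * vpoly c1 + e2 * vpoly c2 + e3 * vpoly c3 + e4 * vpoly c4.
have : inP fN D g.
  rewrite /g -(sm_good _ hq g1) -(sm_good _ hq g2) -(sm_good _ hq g3) -(sm_good _ hq g4).
  by do !apply: (inP_add hD); apply: (lideal_sm hD fxN).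
move=> [c hc hg]; exists c => //; split.
- exact: (comp_gen dN1 d11 d12 d13 d14 p1 hg).
- have hg' : pdvd fN (e2 * vpoly c2 + e1 * vpoly c1 + e3 * vpoly c3 + e4 * vpoly c4 - vpoly c).
    by have -> : e2 * vpoly c2 + e1 * vpoly c1 + e3 * vpoly c3 + e4 * vpoly c4 = g by rewrite /g; ring.
  exact: (comp_gen dN2 d22 d21 d23 d24 p2 hg').
- have hg' : pdvd fN (e3 * vpoly c3 + e1 * vpoly c1 + e2 * vpoly c2 + e4 * vpoly c4 - vpoly c).
    by have -> : e3 * vpoly c3 + e1 * vpoly c1 + e2 * vpoly c2 + e4 * vpoly c4 = g by rewrite /g; ring.
  exact: (comp_gen dN3 d33 d31 d32 d34 p3 hg').
- have hg' : pdvd fN (e4 * vpoly c4 + e1 * vpoly c1 + e2 * vpoly c2 + e3 * vpoly c3 - vpoly c).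
    by have -> : e4 * vpoly c4 + e1 * vpoly c1 + e2 * vpoly c2 + e3 * vpoly c3 = g by rewrite /g; ring.
  exact: (comp_gen dN4 d44 d41 d42 d43 p4 hg').
Qed.


Definition red m f (c : 'rV[R]_n) : 'rV[R]_m := vrow m (Pdiv.Ring.rmodp (vpoly c) f).

Lemma red_spec m f (c : 'rV[R]_n) : f \is monic -> size f = m.+1 ->
  pdvd f (vpoly c - vpoly (red m f c)).
Proof.
move=> mon hs; rewrite /red vpolyK.
  by exists (Pdiv.Ring.rdivp (vpoly c) f); rewrite {1}(Pdiv.RingMonic.rdivp_eq mon (vpoly c)) addrK.
have := Pdiv.Ring.ltn_rmodp (vpoly c) f; rewrite monic_neq0 // hs ltnS; by apply.
Qed.

Lemma pdvd_rows f (c d : 'rV[R]_n) m (r : 'rV[R]_m) :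
  pdvd f (vpoly c - vpoly r) -> pdvd f (vpoly d - vpoly r) -> pdvd f (vpoly c - vpoly d).
Proof.
move=> k1 k2; have -> : vpoly c - vpoly d = (vpoly c - vpoly r) - (vpoly d - vpoly r) by ring.
exact: pdvdB.
Qed.

Lemma decomp_of (D : {set 'rV[R]_n}) : is_lideal T fN D ->
  decomp4 T f1 f2 f3 f4 D (img n1 f1 D) (img n2 f2 D) (img n3 f3 D) (img n4 f4 D).
Proof.
move=> hD; split.
- exact: (img_lideal hD fxN fx1 mon1 sz1 dN1).
- exact: (img_lideal hD fxN fx2 mon2 sz2 dN2).
- exact: (img_lideal hD fxN fx3 mon3 sz3 dN3).
- exact: (img_lideal hD fxN fx4 mon4 sz4 dN4).
split.
  move=> c hc; split; [|split; [|split]] => r /cong_pdvd hr; apply/imgP => //;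
  exists c => //; exact: hr.
move=> r1 r2 r3 r4 /imgP -/(_ mon1) [c1 hc1 p1] /imgP -/(_ mon2) [c2 hc2 p2]
  /imgP -/(_ mon3) [c3 hc3 p3] /imgP -/(_ mon4) [c4 hc4 p4].
have [c hc [q1 q2 q3 q4]] := crt_surj hD hc1 hc2 hc3 hc4 p1 p2 p3 p4.
by exists c => //; split; apply/cong_pdvd.
Qed.

Lemma sub_of_imgs (D1 D2 : {set 'rV[R]_n}) : is_lideal T fN D1 -> is_lideal T fN D2 ->
  img n1 f1 D1 \subset img n1 f1 D2 -> img n2 f2 D1 \subset img n2 f2 D2 ->
  img n3 f3 D1 \subset img n3 f3 D2 -> img n4 f4 D1 \subset img n4 f4 D2 ->
  D1 \subset D2.
Proof.
move=> hD1 hD2 s1 s2 s3 s4; apply/subsetP => c hc.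
have m1 : red n1 f1 c \in img n1 f1 D2.
  by apply: (subsetP s1); apply/imgP => //; exists c => //; apply: red_spec.
have m2 : red n2 f2 c \in img n2 f2 D2.
  by apply: (subsetP s2); apply/imgP => //; exists c => //; apply: red_spec.
have m3 : red n3 f3 c \in img n3 f3 D2.
  by apply: (subsetP s3); apply/imgP => //; exists c => //; apply: red_spec.
have m4 : red n4 f4 c \in img n4 f4 D2.
  by apply: (subsetP s4); apply/imgP => //; exists c => //; apply: red_spec.
move: m1 m2 m3 m4 => /imgP -/(_ mon1) [c1 hc1 p1] /imgP -/(_ mon2) [c2 hc2 p2]
  /imgP -/(_ mon3) [c3 hc3 p3] /imgP -/(_ mon4) [c4 hc4 p4].
have [d hd [q1 q2 q3 q4]] := crt_surj hD2 hc1 hc2 hc3 hc4 p1 p2 p3 p4.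
suff -> : c = d by [].
apply: (pdvd_uniq (lid_mon hD1) (lid_size hD1)); apply: crt_inj.
- exact: (pdvd_rows (red_spec c mon1 sz1) q1).
- exact: (pdvd_rows (red_spec c mon2 sz2) q2).
- exact: (pdvd_rows (red_spec c mon3 sz3) q3).
- exact: (pdvd_rows (red_spec c mon4 sz4) q4).
Qed.

Lemma card_decomp (D : {set 'rV[R]_n}) : is_lideal T fN D ->
  #|D| = (#|img n1 f1 D| * #|img n2 f2 D| * #|img n3 f3 D| * #|img n4 f4 D|)%N.
Proof.
move=> hD.
pose phi (c : 'rV[R]_n) := (red n1 f1 c, (red n2 f2 c, (red n3 f3 c, red n4 f4 c))).
have inj : {in D &, injective phi}.
  move=> c d hc hd [e1' e2' e3' e4'].
  apply: (pdvd_uniq (lid_mon hD) (lid_size hD)); apply: crt_inj.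
  - by apply: (pdvd_rows (red_spec c mon1 sz1)); rewrite e1'; apply: red_spec.
  - by apply: (pdvd_rows (red_spec c mon2 sz2)); rewrite e2'; apply: red_spec.
  - by apply: (pdvd_rows (red_spec c mon3 sz3)); rewrite e3'; apply: red_spec.
  - by apply: (pdvd_rows (red_spec c mon4 sz4)); rewrite e4'; apply: red_spec.
rewrite -(card_in_imset inj).
have -> : phi @: D = setX (img n1 f1 D) (setX (img n2 f2 D) (setX (img n3 f3 D) (img n4 f4 D))).
  apply/setP => [[r1 [r2 [r3 r4]]]]; rewrite !in_setX /=; apply/idP/idP.
    case/imsetP => c hc [-> -> -> ->].
    by apply/and4P; split; apply/imgP => //; exists c => //; apply: red_spec.
  case/and4P => /imgP -/(_ mon1) [c1 hc1 p1] /imgP -/(_ mon2) [c2 hc2 p2]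
    /imgP -/(_ mon3) [c3 hc3 p3] /imgP -/(_ mon4) [c4 hc4 p4].
  have [c hc [q1 q2 q3 q4]] := crt_surj hD hc1 hc2 hc3 hc4 p1 p2 p3 p4.
  apply/imsetP; exists c => //; rewrite /phi.
  have E : forall m f (r : 'rV[R]_m), f \is monic -> size f = m.+1 ->
      pdvd f (vpoly c - vpoly r) -> red m f c = r.
    move=> m f r mon hs hp; apply: (pdvd_uniq mon hs).
    have -> : vpoly (red m f c) - vpoly r = (vpoly c - vpoly r) - (vpoly c - vpoly (red m f c)) by ring.
    by apply: pdvdB => //; apply: red_spec.
  by rewrite (E _ _ _ mon1 sz1 q1) (E _ _ _ mon2 sz2 q2) (E _ _ _ mon3 sz3 q3) (E _ _ _ mon4 sz4 q4).
by rewrite !cardsX !mulnA.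
Qed.

Hypothesis Tinj : injective T.
Hypothesis n0 : (0 < n)%N.
Hypothesis HfN : fN = 'X^n + 1.

Lemma main_gen (C : {set 'rV[R]_n}) : is_lideal T fN C ->
  exists (C1 : {set 'rV[R]_n1}) (C2 : {set 'rV[R]_n2})
         (C3 : {set 'rV[R]_n3}) (C4 : {set 'rV[R]_n4})
         (C1perp : {set 'rV[R]_n2}) (C2perp : {set 'rV[R]_n1})
         (C3perp : {set 'rV[R]_n4}) (C4perp : {set 'rV[R]_n3}),
    [/\ decomp4 T f1 f2 f3 f4 C C1 C2 C3 C4,
        #|C| = (#|C1| * #|C2| * #|C3| * #|C4|)%N,
        decomp4 T f1 f2 f3 f4 (dual C) C2perp C1perp C4perp C3perp &
        (C = dual C <->
           [/\ C1 = C2perp, C2 = C1perp, C3 = C4perp & C4 = C3perp])].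
Proof.
move=> hC.
have hD : is_lideal T fN (dual C).
  by rewrite HfN; apply: dual_lideal => //; rewrite -HfN.
exists (img n1 f1 C), (img n2 f2 C), (img n3 f3 C), (img n4 f4 C),
  (img n2 f2 (dual C)), (img n1 f1 (dual C)), (img n4 f4 (dual C)), (img n3 f3 (dual C)).
split; [exact: decomp_of | exact: card_decomp | exact: decomp_of |].
split; first by move=> h; rewrite -h.
move=> [e1' e2' e3' e4']; apply/eqP; rewrite eqEsubset; apply/andP; split.
  by apply: sub_of_imgs => //; rewrite ?e1' ?e2' ?e3' ?e4'.
by apply: sub_of_imgs => //; rewrite ?e1' ?e2' ?e3' ?e4'.
Qed.

End CRT.



Section Ident.
Variable S : comNzRingType.
Variables Y A K : S.
Hypothesis AA : A * A = -1.
Hypothesis K6 : 6 * K = 1.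

Lemma bezout_id :
  let f1 := Y - A in let f2 := Y + A in
  let f3 := Y ^+ 2 + A * Y - 1 in let f4 := Y ^+ 2 - A * Y - 1 in
  let c0 := 2 * K * (3 * A * K) in
  (- c0) * (f2 * f3 * f4) + c0 * (f1 * f3 * f4)
  + (- c0 * (Y ^+ 2 - 2) * (Y + A)) * (f1 * f2 * f4)
  + (c0 * (Y ^+ 2 - 2) * (Y - A)) * (f1 * f2 * f3) = 1.
Proof.
move=> f1 f2 f3 f4 c0.
have B1 : 3 * A * K * (f1 - f2) = 1.
  have -> : 3 * A * K * (f1 - f2) = - ((6 * K) * (A * A)) by rewrite /f1 /f2; ring.
  by rewrite AA K6 mulrN1 opprK.
have B2 : 3 * A * K * (- (Y - A) * f3 + (Y + A) * f4) = 1.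
  have -> : 3 * A * K * (- (Y - A) * f3 + (Y + A) * f4) = - ((6 * K) * (A * A)).
    by rewrite /f3 /f4; ring.
  by rewrite AA K6 mulrN1 opprK.
have -> : (- c0) * (f2 * f3 * f4) + c0 * (f1 * f3 * f4)
  + (- c0 * (Y ^+ 2 - 2) * (Y + A)) * (f1 * f2 * f4)
  + (c0 * (Y ^+ 2 - 2) * (Y - A)) * (f1 * f2 * f3)
  = 2 * K * (f3 * f4) * (3 * A * K * (f1 - f2))
    - 2 * K * (Y ^+ 2 - 2) * (f1 * f2) * (3 * A * K * (- (Y - A) * f3 + (Y + A) * f4)).
  by rewrite /c0; ring.
rewrite B1 B2 !mulr1.
have -> : 2 * K * (f3 * f4) - 2 * K * (Y ^+ 2 - 2) * (f1 * f2) = 2 * K * (1 - 2 * (A * A)).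
  by rewrite /f1 /f2 /f3 /f4; ring.
by rewrite AA; transitivity (6 * K); [ring | exact: K6].
Qed.

Lemma factor_id :
  (Y - A) * (Y + A) * (Y ^+ 2 + A * Y - 1) * (Y ^+ 2 - A * Y - 1) = Y ^+ 6 + 1.
Proof.
have -> : (Y - A) * (Y + A) * (Y ^+ 2 + A * Y - 1) * (Y ^+ 2 - A * Y - 1)
  = (Y ^+ 2 - A * A) * ((Y ^+ 2 - 1) ^+ 2 - (A * A) * Y ^+ 2) by ring.
rewrite AA; ring.
Qed.
End Ident.

Unset Implicit Arguments. Set Strict Implicit.

Section Fp.
Variables (p : nat) (R : finComNzRingType).
Hypothesis pr : prime p.
Hypothesis chR : p \in [pchar R].

Let hM : (Zp_trunc (pdiv p)).+2 \in [pchar R].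
Proof. by rewrite Fp_cast. Qed.

Lemma Fp_embM (x y : 'F_p) : Fp_emb R (x * y) = Fp_emb R x * Fp_emb R y.
Proof. by rewrite /Fp_emb /= (GRing.natr_mod_pchar hM) natrM. Qed.
Lemma Fp_embD (x y : 'F_p) : Fp_emb R (x + y) = Fp_emb R x + Fp_emb R y.
Proof. by rewrite /Fp_emb /= (GRing.natr_mod_pchar hM) natrD. Qed.
Lemma Fp_emb1 : Fp_emb R (1 : 'F_p) = 1.
Proof. by rewrite /Fp_emb /= (GRing.natr_mod_pchar hM). Qed.
Lemma Fp_emb0 : Fp_emb R (0 : 'F_p) = 0.
Proof. by []. Qed.
Lemma Fp_embN1 : Fp_emb R (-1 : 'F_p) = -1.
Proof.
have := Fp_embD (-1) 1; rewrite addNr Fp_emb0 Fp_emb1 => /eqP.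
by rewrite eq_sym addr_eq0 => /eqP.
Qed.
End Fp.

Lemma oddNexp (S : nzRingType) (x : S) k : odd k -> (- x) ^+ k = - (x ^+ k).
Proof. by move=> hk; rewrite exprNn -signr_odd hk expr1 mulN1r. Qed.

Lemma monic_size_add (S : nzRingType) n (g : {poly S}) : (size g <= n)%N ->
  ('X^n + g) \is monic /\ size ('X^n + g) = n.+1.
Proof.
move=> hg; have hs : (size g < size ('X^n : {poly S}))%N by rewrite size_polyXn ltnS.
split; first by rewrite monicE lead_coefDl // lead_coefXn.
by rewrite size_polyDl // size_polyXn.
Qed.

Lemma goodXn (R : finComNzRingType) q (e : {poly R}) k : goodp q e -> goodp q (e ^+ k).
Proof.
move=> he; elim: k => [|k IH]; first by rewrite expr0 -polyC1; apply: goodC.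
by rewrite exprS; apply: goodM.
Qed.
Lemma goodn (R : finComNzRingType) q k : goodp q (k%:R : {poly R}).
Proof. by rewrite -polyC_natr; apply: goodC. Qed.
Lemma good1 (R : finComNzRingType) q : goodp q (1 : {poly R}).
Proof. by rewrite -polyC1; apply: goodC. Qed.

Ltac good := repeat first [ apply: goodM | apply: goodD | apply: goodN | apply: goodXq | apply: goodXn
  | apply: goodXq | apply: goodC | apply: good1 | apply: goodn ].

Lemma goods (R : finComNzRingType) q (A K : {poly R}) : goodp q A -> goodp q K ->
  let Y := 'X^q in
  let f1 := Y - A in let f2 := Y + A in
  let f3 := Y ^+ 2 + A * Y - 1 in let f4 := Y ^+ 2 - A * Y - 1 in
  let c0 := 2 * K * (3 * A * K) in
  [/\ goodp q (- c0 * (f2 * f3 * f4)), goodp q (c0 * (f1 * f3 * f4)),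
      goodp q (- c0 * (Y ^+ 2 - 2) * (Y + A) * (f1 * f2 * f4)) &
      goodp q (c0 * (Y ^+ 2 - 2) * (Y - A) * (f1 * f2 * f3))].
Proof.
move=> gA gK Y f1 f2 f3 f4 c0.
have gY : goodp q Y by apply: goodXq.
have g2 : goodp q (2 : {poly R}) by apply: goodn.
have g3 : goodp q (3 : {poly R}) by apply: goodn.
have gc : goodp q c0 by rewrite /c0; do !apply: goodM => //.
have gf1 : goodp q f1 by apply: goodD => //; apply: goodN.
have gf2 : goodp q f2 by apply: goodD.
have gYY : goodp q (Y ^+ 2 - 2) by apply: goodD; [apply: goodXn | apply: goodN].
have gf3 : goodp q f3.
  by apply: goodD; [apply: goodD; [apply: goodXn | apply: goodM] | apply: goodN; apply: good1].
have gf4 : goodp q f4.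
  by apply: goodD; [apply: goodD; [apply: goodXn | apply: goodN; apply: goodM] | apply: goodN; apply: good1].
split.
- by apply: goodM; [apply: goodN | do !apply: goodM].
- by do !apply: goodM.
- by apply: goodM; [apply: goodM; [apply: goodM; [apply: goodN|]|] | do !apply: goodM].
- by apply: goodM; [apply: goodM; [apply: goodM|]|do !apply: goodM].
Qed.

Theorem theorem5p2 (p m k s : nat) (F : finFieldType) (R : finComNzRingType)
    (iota : {rmorphism F -> R}) (u : R) (Theta : {rmorphism R -> R}) (xi : 'F_p) :
  prime p -> (p %% 12 = 5)%N -> odd m -> #|F| = (p ^ m)%N ->
  (* R = R_k = F[u]/<u^k> with F = F_(p^m) *)
  u ^+ k = 0 ->
  bijective (fun a : 'rV[F]_k => \sum_(i < k) iota (a 0 i) * u ^+ i) ->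
  (* Theta in Aut(R_k), of order dividing p^s *)
  bijective Theta -> (forall r : R, iter (p ^ s)%N Theta r = r) ->
  (* xi generates F_p^* *)
  (p.-1)%N.-primitive_root xi ->
  let alpha : 'F_p := xi ^+ (p.-1 %/ 4)%N in
  let a : R := Fp_emb R alpha in
  let ai : R := Fp_emb R alpha^-1 in
  let N := (6 * p ^ s)%N in
  let fN : {poly R} := 'X^N + 1 in
  let f1 := skew_pow Theta ('X - a%:P) (p ^ s) in
  let f2 := skew_pow Theta ('X + a%:P) (p ^ s) in
  let f3 := skew_pow Theta ('X^2 + a *: 'X - 1) (p ^ s) in
  let f4 := skew_pow Theta ('X^2 + ai *: 'X - 1) (p ^ s) in
  fN = skew_mul Theta (skew_mul Theta (skew_mul Theta f1 f2) f3) f4 /\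
  forall C : {set 'rV[R]_N}, is_lideal Theta fN C ->
  exists (C1 : {set 'rV[R]_(p ^ s)}) (C2 : {set 'rV[R]_(p ^ s)})
         (C3 : {set 'rV[R]_(2 * p ^ s)}) (C4 : {set 'rV[R]_(2 * p ^ s)})
         (C1perp : {set 'rV[R]_(p ^ s)}) (C2perp : {set 'rV[R]_(p ^ s)})
         (C3perp : {set 'rV[R]_(2 * p ^ s)}) (C4perp : {set 'rV[R]_(2 * p ^ s)}),
    [/\ decomp4 Theta f1 f2 f3 f4 C C1 C2 C3 C4,
        #|C| = (#|C1| * #|C2| * #|C3| * #|C4|)%N,
        (* C1perp lives in R[x]/<f2>, C2perp in R[x]/<f1>, C3perp in R[x]/<f4>,
           C4perp in R[x]/<f3> *)
        decomp4 Theta f1 f2 f3 f4 (dual C) C2perp C1perp C4perp C3perp &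
        (C = dual C <->
           [/\ C1 = C2perp, C2 = C1perp, C3 = C4perp & C4 = C3perp])].
Proof.
move=> pr p12 oddm cardF uk bij_u bijT hT prim alpha a ai N fN f1 f2 f3 f4.
set q := (p ^ s)%N.
have p_gt1 : (1 < p)%N by apply: prime_gt1.
have [t ht] : exists t, p = (12 * t + 5)%N.
  by exists (p %/ 12)%N; lia.
have chF : p \in [pchar F] := card_finPcharP cardF pr.
have chR : p \in [pchar R] := rmorph_pchar iota chF.
have chP : p \in [pchar {poly R}] by rewrite pchar_poly.
have qnat : [pchar {poly R}].-nat q by rewrite (eq_pnat _ (pcharf_eq chP)) pnatX pnat_id.
have q_odd : odd q by rewrite /q oddX ht oddD oddM /= orbT.
have q4 : (q %% 4 = 1)%N.
  rewrite /q -modnXm (_ : (p %% 4 = 1)%N); first by rewrite exp1n.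
  by lia.
have q_gt0 : (0 < q)%N by rewrite expn_gt0 (ltnW p_gt1).
have Hp1 : p.-1 = (12 * t + 4)%N by lia.
have a4 : alpha ^+ 4 = 1.
  by rewrite /alpha -exprM (_ : (p.-1 %/ 4 * 4 = p.-1)%N) ?prim_expr_order // Hp1; lia.
have a2n1 : alpha ^+ 2 != 1.
  rewrite /alpha -exprM -(prim_order_dvd prim) Hp1.
  rewrite (_ : ((12 * t + 4) %/ 4 * 2 = 6 * t + 2)%N); last by lia.
  apply/negP => /(dvdn_leq (_ : (0 < 6 * t + 2)%N)) h.
  by have := h (ltac:(lia)); lia.
have a2 : alpha ^+ 2 = -1.
  have e : (alpha ^+ 2 - 1) * (alpha ^+ 2 + 1) = alpha ^+ 4 - 1 by ring.
  move: e; rewrite a4 subrr => /eqP; rewrite mulf_eq0 subr_eq0 (negbTE a2n1) /=.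
  by rewrite addr_eq0 => /eqP.
have anz : alpha != 0.
  apply/negP => /eqP a0; move: a2; rewrite a0 expr0n /= => /eqP.
  by rewrite eq_sym oppr_eq0 oner_eq0.
have aa : a * a = -1.
  by rewrite /a -Fp_embM // -expr2 a2 Fp_embN1.
have aai : a * ai = 1 by rewrite /a /ai -Fp_embM // mulfV // Fp_emb1.
have eai : ai = - a.
  have -> : ai = ai * - (a * a) by rewrite aa opprK mulr1.
  by rewrite mulrN mulrA [ai * a]mulrC aai mul1r.
have Ta : Theta a = a by rewrite /a /Fp_emb rmorph_nat.
have aq : a ^+ q = a.
  rewrite {1}(divn_eq q 4) q4 exprD mulnC exprM expr1.
  have -> : a ^+ 4 = 1 by rewrite (_ : 4 = 2 + 2)%N // exprD expr2 aa mulrN1 opprK.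
  by rewrite expr1n mul1r.
set A : {poly R} := a%:P.
set Y : {poly R} := 'X^q.
have AA : A * A = -1 by rewrite /A -polyCM aa polyCN polyC1.
have fxA : fixedp Theta A := fixedC Ta.
have hb1 : fixedp Theta ('X - a%:P) by apply: fixedD; [apply: fixedX | apply: fixedN].
have hb2 : fixedp Theta ('X + a%:P) by apply: fixedD; [apply: fixedX | ].
have hb3 : fixedp Theta ('X^2 + a *: 'X - 1).
  by rewrite -mul_polyC; apply: fixedD; [apply: fixedD; [apply: fixedXn | apply: fixedM; [exact: fxA | apply: fixedX]] | apply: fixedN; apply: fixed1].
have hb4 : fixedp Theta ('X^2 + ai *: 'X - 1).
  rewrite eai -mul_polyC; apply: fixedD; [apply: fixedD; [apply: fixedXn | apply: fixedM; [| apply: fixedX]] | apply: fixedN; apply: fixed1].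
  by rewrite polyCN; apply: fixedN.
have fx1 : fixedp Theta f1 by rewrite /f1 (sm_pow_fixed q hb1).2; exact: (sm_pow_fixed q hb1).1.
have fx2 : fixedp Theta f2 by rewrite /f2 (sm_pow_fixed q hb2).2; exact: (sm_pow_fixed q hb2).1.
have fx3 : fixedp Theta f3 by rewrite /f3 (sm_pow_fixed q hb3).2; exact: (sm_pow_fixed q hb3).1.
have fx4 : fixedp Theta f4 by rewrite /f4 (sm_pow_fixed q hb4).2; exact: (sm_pow_fixed q hb4).1.
have fxN : fixedp Theta fN by apply: fixedXn1.
have Aq : A ^+ q = A by rewrite /A -polyC_exp aq.
have ef1 : f1 = Y - A.
  rewrite /f1 (sm_pow_fixed q hb1).2 exprDn_pchar // oddNexp //.
  by rewrite -/A Aq.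
have ef2 : f2 = Y + A.
  by rewrite /f2 (sm_pow_fixed q hb2).2 exprDn_pchar // -/A Aq.
have ef3 : f3 = Y ^+ 2 + A * Y - 1.
  rewrite /f3 (sm_pow_fixed q hb3).2 !exprDn_pchar // oddNexp // expr1n.
  by rewrite exprZn aq exprAC -mul_polyC.
have ef4 : f4 = Y ^+ 2 - A * Y - 1.
  rewrite /f4 (sm_pow_fixed q hb4).2 !exprDn_pchar // oddNexp // expr1n.
  by rewrite exprZn eai oddNexp // aq exprAC scaleNr -mul_polyC.
have N_gt0 : (0 < N)%N by rewrite /N muln_gt0.
have mon1 : f1 \is monic by rewrite ef1 monicXnsubC.
have sz1 : size f1 = q.+1 by rewrite ef1 size_XnsubC.
have mon2 : f2 \is monic by rewrite ef2 monicXnaddC.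
have sz2 : size f2 = q.+1 by rewrite ef2 size_XnaddC.
have Y2 : Y ^+ 2 = 'X^(2 * q) by rewrite /Y -exprM mulnC.
have szr : forall c : R, (size (c%:P * Y - 1)%R <= 2 * q)%N.
  move=> c; apply/leq_sizeP => j hj.
  rewrite coefB coefCM coefXn coef1.
  have hqj : (q < j)%N by clear -q_gt0 hj; lia.
  have -> : (j == q) = false by apply: gtn_eqF.
  have -> : (j == 0%N) = false by apply: gtn_eqF; apply: leq_ltn_trans hqj.
  by rewrite mulr0 subrr.
have ms3 := @monic_size_add R _ _ (szr a).
have ms4 := @monic_size_add R _ _ (szr (- a)).
have ef3' : f3 = 'X^(2 * q) + (a%:P * Y - 1) by rewrite ef3 Y2 addrA.
have ef4' : f4 = 'X^(2 * q) + ((- a)%:P * Y - 1) by rewrite ef4 Y2 polyCN mulNr addrA.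
have mon3 : f3 \is monic by rewrite ef3' ms3.1.
have sz3 : size f3 = (2 * q).+1 by rewrite ef3' ms3.2.
have mon4 : f4 \is monic by rewrite ef4' ms4.1.
have sz4 : size f4 = (2 * q).+1 by rewrite ef4' ms4.2.
have HN : fN = f1 * f2 * f3 * f4.
  by rewrite ef1 ef2 ef3 ef4 factor_id // /Y -exprM mulnC.
split.
  by rewrite (sm_fixed _ fx4) (sm_fixed _ fx3) (sm_fixed _ fx2) HN.
move=> C hC.
have Tinj : injective Theta by case: bijT => g h1 h2; apply: (can_inj h1).
pose K : {poly R} := ((2 * t + 1)%N%:R)%:P.
have K6 : 6 * K = 1.
  rewrite /K polyC_natr -natrM.
  have -> : (6 * (2 * t + 1))%N = (p + 1)%N by clear -ht; lia.
  by rewrite -(GRing.natr_mod_pchar chP) modnDl modn_small.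
pose c0 := 2 * K * (3 * A * K).
pose h1 := - c0.
pose h2 := c0.
pose h3 := - c0 * (Y ^+ 2 - 2) * (Y + A).
pose h4 := c0 * (Y ^+ 2 - 2) * (Y - A).
pose e1 := h1 * (f2 * f3 * f4).
pose e2 := h2 * (f1 * f3 * f4).
pose e3 := h3 * (f1 * f2 * f4).
pose e4 := h4 * (f1 * f2 * f3).
have He : e1 + e2 + e3 + e4 = 1.
  by rewrite /e1 /e2 /e3 /e4 /h1 /h2 /h3 /h4 /c0 ef1 ef2 ef3 ef4; exact: (@bezout_id _ Y A K AA K6).
have [G1 G2 G3 G4] := @goods R q A K (@goodC R q a) (@goodC R q ((2 * t + 1)%N%:R)).
have g1 : goodp q e1 by rewrite /e1 /h1 /c0 ef2 ef3 ef4; exact: G1.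
have g2 : goodp q e2 by rewrite /e2 /h2 /c0 ef1 ef3 ef4; exact: G2.
have g3 : goodp q e3 by rewrite /e3 /h3 /c0 ef1 ef2 ef4; exact: G3.
have g4 : goodp q e4 by rewrite /e4 /h4 /c0 ef1 ef2 ef3; exact: G4.
exact: (@main_gen R Theta q hT N q q (2 * q) (2 * q) fN f1 f2 f3 f4 e1 e2 e3 e4 h1 h2 h3 h4
  mon1 mon2 mon3 mon4 fx1 fx2 fx3 fx4 fxN sz1 sz2 sz3 sz4 HN He erefl erefl erefl erefl
  g1 g2 g3 g4 Tinj N_gt0 erefl C hC).
Qed.
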